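(* Let $L\subset\mathbb{R}^{2n}$ be a Lagrangian submanifold of the form $L=\{(q,\nabla F(q)):q\in\mathbb{R}^n\}$ for a cubic polynomial generating function $F:\mathbb{R}^n\to\mathbb{R}$. Then the outer symplectic billiard relation associated with $L$ is completely integrable: the $n$ functions $G_j(Q,P)=P_j-\frac{\partial F}{\partial Q_j}(Q)$, $j=1,\dots,n$, on $\mathbb{R}^{2n}$ pairwise Poisson commute and are invariant under the outer symplectic billiard relation, i.e. $G_j(A)=G_j(B)$ for all $j$ whenever $A,B\in\mathbb{R}^{2n}$ are in outer symplectic billiard relation with respect to $L$.
   Context: $\mathbb{R}^{2n}$ has coordinates $(Q,P)$, $Q,P\in\mathbb{R}^n$, and symplectic form $\omega=\sum_i dP_i\wedge dQ_i$. Two points $A,B\in\mathbb{R}^{2n}$ are in outer symplectic billiard relation with respect to $L$ if $X=\tfrac12(A+B)\in L$ and $B-A$ is symplectically orthogonal to $T_XL$; since $L$ is Lagrangian, this means $A=X+W$, $B=X-W$ for some $X\in L$, $W\in T_XL$. *)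

(* Defs.v *)
From HB Require Import structures.
From mathcomp Require Import all_boot all_order all_algebra.
From mathcomp Require Import mpoly.
Set Implicit Arguments. Unset Strict Implicit. Unset Printing Implicit Defensive.
Import Order.TTheory GRing.Theory Num.Theory.
Local Open Scope ring_scope.

Section OSB.
Variables (R : realFieldType) (n : nat).

Definition phase := (('I_n -> R) * ('I_n -> R))%type.

Definition Qidx (i : 'I_n) : 'I_(n + n) := lshift n i.
Definition Pidx (i : 'I_n) : 'I_(n + n) := rshift n i.

Definition pt (A : phase) : 'I_(n + n) -> R :=
  fun k => match split k with inl i => A.1 i | inr i => A.2 i end.

Definition liftQ (f : {mpoly R[n]}) : {mpoly R[n + n]} :=
  comp_mpoly [tuple 'X_(Qidx i) | i < n] f.

Definition Gfun (F : {mpoly R[n]}) (j : 'I_n) : {mpoly R[n + n]} :=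
  'X_(Pidx j) - liftQ (F^`M(j)).

(* Poisson bracket for omega = sum_i dP_i /\ dQ_i *)
Definition poisson (f g : {mpoly R[n + n]}) : {mpoly R[n + n]} :=
  \sum_(i < n) (f^`M(Pidx i) * g^`M(Qidx i) - f^`M(Qidx i) * g^`M(Pidx i)).

Definition omega (u v : phase) : R :=
  \sum_(i < n) (u.2 i * v.1 i - v.2 i * u.1 i).

Definition onL (F : {mpoly R[n]}) (X : phase) : Prop :=
  forall i, X.2 i = (F^`M(i)).@[X.1].

Definition tangentL (F : {mpoly R[n]}) (X : phase) (W : phase) : Prop :=
  exists v : 'I_n -> R,
    W.1 = v /\ forall j, W.2 j = \sum_(i < n) ((F^`M(j))^`M(i)).@[X.1] * v i.

Definition osb_rel (F : {mpoly R[n]}) (A B : phase) : Prop :=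
  let X : phase := (fun i => (A.1 i + B.1 i) / 2, fun i => (A.2 i + B.2 i) / 2) in
  let D : phase := (fun i => B.1 i - A.1 i, fun i => B.2 i - A.2 i) in
  onL F X /\ forall W, tangentL F X W -> omega D W = 0.

End OSB.

(* Main.v *)
Require Import Defs.
From HB Require Import structures.
From mathcomp Require Import all_boot all_order all_algebra.
From mathcomp Require Import mpoly.
From mathcomp Require Import ring.
Import GRing.Theory Num.Theory.
Local Open Scope ring_scope.
Set Implicit Arguments. Unset Strict Implicit.
Lemma mderivXU (R : realFieldType) (n : nat) (k i : 'I_n) : ('X_k : {mpoly R[n]})^`M(i) = (k == i)%:R.
Proof.
rewrite mderivX mnm1E; case: eqP => [->|_]; last by rewrite scale0r.
by rewrite scale1r -{1}[U_(i)%MM]add0m addmK mpolyX0.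
Qed.
Section S.
Variables (R : realFieldType) (n : nat).

Lemma pt_Q (A : phase R n) i : pt A (Qidx i) = A.1 i.
Proof. by rewrite /pt /Qidx -[lshift n i]/(unsplit (inl i)) unsplitK. Qed.
Lemma pt_P (A : phase R n) i : pt A (Pidx i) = A.2 i.
Proof. by rewrite /pt /Pidx -[rshift n i]/(unsplit (inr i)) unsplitK. Qed.

Lemma liftQ_eval (f : {mpoly R[n]}) (A : phase R n) :
  (liftQ f).@[pt A] = f.@[A.1].
Proof.
rewrite /liftQ comp_mpoly_meval; apply: meval_eq => i.
by rewrite tnth_mktuple mevalXU pt_Q.
Qed.


Implicit Types f g p : {mpoly R[n]}.
Definition chainP (i : 'I_n) (f : {mpoly R[n]}) :=
  (liftQ f)^`M(Pidx i) = 0 /\ (liftQ f)^`M(Qidx i) = liftQ (f^`M(i)).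

Lemma liftQM f g : liftQ (f * g) = liftQ f * liftQ g.
Proof. by rewrite /liftQ rmorphM. Qed.

Lemma chainM i f g : chainP i f -> chainP i g -> chainP i (f * g).
Proof.
move=> [hf1 hf2] [hg1 hg2]; split; rewrite liftQM mderivM.
  by rewrite hf1 hg1 mul0r mulr0 addr0.
by rewrite hf2 hg2 mderivM /liftQ rmorphD !rmorphM.
Qed.

Lemma chain1 i : chainP i 1.
Proof.
by rewrite /chainP /liftQ rmorph1 -mpolyC1 !mderivC comp_mpoly0.
Qed.

Lemma chainX i k : chainP i 'X_k.
Proof.
rewrite /chainP /liftQ comp_mpolyXU -tnth_nth tnth_mktuple !mderivXU.
split.
  by rewrite /Pidx /Qidx eq_lrshift.
rewrite /Qidx (inj_eq (@lshift_inj _ _)).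
by case: eqP => _; rewrite ?comp_mpoly1 ?comp_mpoly0.
Qed.

Lemma chainD i f g : chainP i f -> chainP i g -> chainP i (f + g).
Proof.
move=> [hf1 hf2] [hg1 hg2]; split; rewrite /liftQ comp_mpolyD mderivD.
  by rewrite hf1 hg1 addr0.
by rewrite hf2 hg2 mderivD comp_mpolyD.
Qed.

Lemma chainZ i c f : chainP i f -> chainP i (c *: f).
Proof.
move=> [hf1 hf2]; split; rewrite /liftQ comp_mpolyZ mderivZ.
  by rewrite hf1 scaler0.
by rewrite hf2 mderivZ comp_mpolyZ.
Qed.

Lemma chain_all i f : chainP i f.
Proof.
elim/mpolyind: f => [|c m p _ _ hp].
  by rewrite /chainP /liftQ comp_mpoly0 !mderiv0 comp_mpoly0.
apply: chainD => //; apply: chainZ.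
rewrite mpolyXE_id; apply: (big_ind (chainP i)); first exact: chain1.
  exact: chainM.
move=> k _; elim: (m k) => [|e ihe]; first by rewrite expr0; exact: chain1.
by rewrite exprS; apply: chainM => //; exact: chainX.
Qed.
Definition TP (x d : 'I_n -> R) p :=
  p.@[fun i => x i + d i] - p.@[fun i => x i - d i] =
  2 * \sum_(i < n) (p^`M(i)).@[x] * d i.

Lemma sum_delta (a : 'I_n) (d : 'I_n -> R) :
  \sum_(i < n) (a == i)%:R * d i = d a.
Proof.
rewrite (bigD1 a) //= eqxx mul1r big1 ?addr0 // => i /negbTE.
by rewrite eq_sym => ->; rewrite mul0r.
Qed.

Lemma eval_nat (v : 'I_n -> R) (k : nat) : ((k%:R : {mpoly R[n]})).@[v] = k%:R.
Proof. by rewrite rmorph_nat. Qed.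

Lemma TP0 x d : TP x d 0.
Proof. by rewrite /TP !meval0 subr0 big1 ?mulr0 // => i _; rewrite mderiv0 meval0 mul0r. Qed.

Lemma TPD x d p q : TP x d p -> TP x d q -> TP x d (p + q).
Proof.
rewrite /TP => hp hq; rewrite !mevalD.
have -> : \sum_(i < n) ((p + q)^`M(i)).@[x] * d i =
  \sum_(i < n) (p^`M(i)).@[x] * d i + \sum_(i < n) (q^`M(i)).@[x] * d i.
  by rewrite -big_split; apply: eq_bigr => i _; rewrite mderivD mevalD mulrDl.
rewrite mulrDr -hp -hq; ring.
Qed.

Lemma TPZ x d c p : TP x d p -> TP x d (c *: p).
Proof.
rewrite /TP => hp; rewrite !mevalZ.
have -> : \sum_(i < n) ((c *: p)^`M(i)).@[x] * d i =
  c * \sum_(i < n) (p^`M(i)).@[x] * d i.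
  by rewrite mulr_sumr; apply: eq_bigr => i _; rewrite mderivZ mevalZ mulrA.
rewrite mulrCA -hp; ring.
Qed.

Lemma TPX x d a : TP x d 'X_a.
Proof.
rewrite /TP !mevalXU.
under eq_bigr do rewrite mderivXU eval_nat.
rewrite sum_delta; ring.
Qed.

Lemma TPXX x d a b : TP x d ('X_b * 'X_a).
Proof.
rewrite /TP !mevalM !mevalXU.
have -> : \sum_(i < n) (('X_b * 'X_a)^`M(i)).@[x] * d i = x a * d b + x b * d a.
  rewrite (eq_bigr (fun i => x a * ((b==i)%:R * d i) + x b * ((a==i)%:R * d i))).
    by rewrite big_split /= -!mulr_sumr !sum_delta.
  move=> i _; rewrite mderivM !mderivXU mevalD !mevalM !eval_nat !mevalXU; ring.
ring.
Qed.

Lemma TPm x d m : (mdeg m <= 2)%N -> TP x d 'X_[m].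
Proof.
move=> hm.
have [/eqP m0|] := eqVneq (mdeg m) 0%N.
  move: m0; rewrite mdeg_eq0 => /eqP ->; rewrite mpolyX0 /TP -mpolyC1 !mevalC subrr big1 ?mulr0 // => i _.
  by rewrite mderivC meval0 mul0r.
move=> nz.
have [a ha] : exists a, m a != 0%N.
  apply/existsP; apply: contraR nz; rewrite negb_exists => /forallP h.
  rewrite mdegE big1 // => i _; exact/eqP/negbNE/h.
have le : (U_(a) <= m)%MM by rewrite lep1mP.
rewrite -(submK le) mpolyXD.
have hd : mdeg (m - U_(a)) = (mdeg m).-1.
  by rewrite -{2}(submK le) mdegD mdeg1 addn1.
have [/eqP|] := eqVneq (mdeg (m - U_(a))) 0%N.
  rewrite mdeg_eq0 => /eqP ->; rewrite mpolyX0 mul1r; exact: TPX.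
move=> nz'.
have /mdeg1P [b /eqP ->] : mdeg (m - U_(a)) == 1%N.
  move: nz'; rewrite hd; move: hm nz; case: (mdeg m) => [|[|[|]]] //.
exact: TPXX.
Qed.

Lemma TP_all x d p : (forall m, m \in msupp p -> (mdeg m <= 2)%N) -> TP x d p.
Proof.
move=> h; rewrite (mpolyE p) big_seq.
apply: (big_ind (TP x d)); [exact: TP0 | exact: TPD |].
move=> m /h hm; apply: TPZ; exact: TPm.
Qed.

Lemma deriv_deg p j : msize p = 4%N -> forall m, m \in msupp (p^`M(j)) -> (mdeg m <= 2)%N.
Proof.
move=> hs m; rewrite mcoeff_msupp mcoeff_mderiv => hm.
have : (m + U_(j))%MM \in msupp p.
  rewrite mcoeff_msupp; apply: contra hm => /eqP ->; by rewrite mul0rn.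
move/msize_mdeg_lt; by rewrite hs mdegD mdeg1 addn1 ltnS.
Qed.
End S.

Lemma sum_deltaR {V : comRingType} {m : nat} (a : 'I_m) (d : 'I_m -> V) :
  \sum_(i < m) (a == i)%:R * d i = d a.
Proof.
rewrite (bigD1 a) //= eqxx mul1r big1 ?addr0 // => i /negbTE.
by rewrite eq_sym => ->; rewrite mul0r.
Qed.

Lemma sum_deltaR' {V : comRingType} {m : nat} (a : 'I_m) (d : 'I_m -> V) :
  \sum_(i < m) d i * (i == a)%:R = d a.
Proof.
rewrite -[RHS](sum_deltaR a); apply: eq_bigr => i _; by rewrite mulrC eq_sym.
Qed.

Lemma GP (R : realFieldType) (n : nat) (F : {mpoly R[n]}) j i :
  (Gfun F j)^`M(Pidx i) = (j == i)%:R.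
Proof.
rewrite /Gfun mderivB mderivXU (chain_all i (F^`M(j))).1 subr0.
by rewrite /Pidx (inj_eq (@rshift_inj _ _)).
Qed.

Lemma GQ (R : realFieldType) (n : nat) (F : {mpoly R[n]}) j i :
  (Gfun F j)^`M(Qidx i) = - liftQ ((F^`M(j))^`M(i)).
Proof.
rewrite /Gfun mderivB mderivXU (chain_all i (F^`M(j))).2.
by rewrite /Pidx /Qidx eq_sym eq_lrshift sub0r.
Qed.

Unset Implicit Arguments.
Theorem mainTheorem5 (R : realFieldType) (n : nat) (F : {mpoly R[n]}) :
  msize F = 4%N ->
  (forall j k : 'I_n, poisson (Gfun F j) (Gfun F k) = 0) /\
  (forall A B : phase R n, osb_rel F A B ->
     forall j : 'I_n, (Gfun F j).@[pt A] = (Gfun F j).@[pt B]).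
Proof.
move=> hF; split.
  move=> j k; rewrite /poisson.
  under eq_bigr do rewrite !GP !GQ.
  rewrite sumrB.
  rewrite (eq_bigr (fun i => (j == i)%:R * - liftQ (F^`M(k)^`M(i)))) //.
  rewrite (sum_deltaR j (fun i => - liftQ (F^`M(k)^`M(i)))).
  rewrite (eq_bigr (fun i => - liftQ (F^`M(j)^`M(i)) * (i == k)%:R)); last first.
    by move=> i _; rewrite eq_sym.
  rewrite (sum_deltaR' k (fun i => - liftQ (F^`M(j)^`M(i)))).
  by rewrite mderiv_comm subrr.
move=> A B [_ horth] j.
rewrite /Gfun !mevalB !mevalXU !pt_P !liftQ_eval.
set X1 := fun i => (A.1 i + B.1 i) / 2.
set D1 := fun i => B.1 i - A.1 i.
pose v := fun i : 'I_n => (i == j)%:R : R.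
have hW := horth (v, fun l => \sum_(i < n) ((F^`M(l))^`M(i)).@[X1] * v i).
have ht : tangentL F (X1, fun i => (A.2 i + B.2 i) / 2)
     (v, fun l => \sum_(i < n) ((F^`M(l))^`M(i)).@[X1] * v i).
  by exists v; split.
move: (hW ht); rewrite /omega /=.
rewrite sumrB /v (sum_deltaR' j (fun i => B.2 i - A.2 i)).
under eq_bigr do rewrite (sum_deltaR' j (fun i0 => ((F^`M(_))^`M(i0)).@[X1])).
move=> horth'.
have hT := TP_all X1 (fun i => D1 i / 2) (deriv_deg (j:=j) hF).
rewrite /TP in hT.
have h2 : (2:R) != 0 by rewrite pnatr_eq0.
have eB : (F^`M(j)).@[fun i => X1 i + D1 i / 2] = (F^`M(j)).@[B.1].
  apply: meval_eq => k; rewrite /X1 /D1; by field.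
have eA : (F^`M(j)).@[fun i => X1 i - D1 i / 2] = (F^`M(j)).@[A.1].
  apply: meval_eq => k; rewrite /X1 /D1; by field.
rewrite eB eA in hT.
have hs : 2 * \sum_(i < n) ((F^`M(j))^`M(i)).@[X1] * (D1 i / 2) =
          \sum_(i < n) ((F^`M(i))^`M(j)).@[X1] * D1 i.
  rewrite mulr_sumr; apply: eq_bigr => i _; rewrite mderiv_comm; by field.
rewrite hs in hT.
apply/eqP; rewrite -subr_eq0; apply/eqP.
have -> : A.2 j - (F^`M(j)).@[A.1] - (B.2 j - (F^`M(j)).@[B.1]) =
  ((F^`M(j)).@[B.1] - (F^`M(j)).@[A.1]) - (B.2 j - A.2 j) by ring.
by rewrite hT -opprB horth' oppr0.
Qed.
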